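(* Let $G$ be a graph and let $C=v_0v_1\ldots v_{n-1}$ be an induced cycle of $G$ of length $n\ge 5$ with good neighbours. For $i=0,\dots,n-1$ let $B_i$ be a biclique of $G$ containing $\{v_{i-1},v_i,v_{i+1}\}$ (indices mod $n$), and let $b_i$ be the vertex of $KB_e(G)$ corresponding to $B_i$. Then $V(B_i)\subseteq N[v_i]$ for all $i$, $C'=b_0b_1\ldots b_{n-1}$ is an induced cycle (of length $n$) of $KB_e(G)$, and $C'$ has good neighbours in $KB_e(G)$.
   Context: All graphs are finite, simple and undirected. A biclique of a graph $G$ is a maximal (with respect to inclusion) induced subgraph of $G$ that is a complete bipartite graph $K_{p,q}$ with $p,q\ge 1$. The edge-biclique graph $KB_e(G)$ has one vertex for each biclique of $G$, two distinct vertices being adjacent iff the corresponding bicliques share at least one edge. An induced cycle $C=v_0v_1\ldots v_{n-1}$ ($n\ge5$) of a graph $H$ has good neighbours (in $H$) if for every vertex $v\in V(H)\setminus V(C)$ and every $i\in\{0,\dots,n-1\}$ (indices mod $n$), $\{v_{i-1},v_{i+1}\}\subseteq N(v)$ implies $v_i\in N(v)$. $N[v]$ is the closed neighbourhood of $v$. *)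

(* Defs.v *)
From HB Require Import structures.
From mathcomp Require Import all_boot.
Set Implicit Arguments. Unset Strict Implicit. Unset Printing Implicit Defensive.

(* A (finite, simple, undirected) graph is a vertex finType with a symmetric,
   irreflexive adjacency relation; those two properties are hypotheses of
   the theorem. *)

Section Graphs.
Variable T : finType.
Variable e : rel T.

Definition is_cbip (B : {set T}) : bool :=
  [exists X : {set T},
    [&& X \subset B, X != set0, (B :\: X) != set0,
        [forall x in X, forall y in X, ~~ e x y],
        [forall x in B :\: X, forall y in B :\: X, ~~ e x y] &
        [forall x in X, forall y in B :\: X, e x y]]].

(* A biclique: an inclusion-maximal vertex set inducing a complete bipartite
   graph (induced subgraphs are determined by their vertex sets). *)
Definition is_biclique (B : {set T}) : bool :=
  is_cbip B && [forall B' : {set T}, (B \subset B') && is_cbip B' ==> (B' == B)].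

Definition cnbhd (v : T) : {set T} := [set w | (w == v) || e v w].

End Graphs.

(* Vertices of KB_e(G): the bicliques of G. *)
Notation biclique e := {B : {set _} | is_biclique e B}.

Definition kbe_adj (T : finType) (e : rel T) : rel (biclique e) :=
  fun b1 b2 => (b1 != b2) &&
    [exists x, exists y,
      [&& x \in val b1, y \in val b1, x \in val b2, y \in val b2 & e x y]].

Definition induced_cycle (V : finType) (adj : rel V) (n : nat)
    (v : 'I_n -> V) : Prop :=
  4 < n /\ injective v /\
  forall i j : 'I_n, adj (v i) (v j) = (j == ordS i) || (i == ordS j).

Definition good_neighbours (V : finType) (adj : rel V) (n : nat)
    (v : 'I_n -> V) : Prop :=
  forall (w : V), w \notin codom v -> forall i : 'I_n,
    adj w (v (ord_pred i)) -> adj w (v (ordS i)) -> adj w (v i).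

(* Main.v *)
Require Import Defs.
From HB Require Import structures.
From mathcomp Require Import all_boot.
From mathcomp Require Import zify.
Set Implicit Arguments. Unset Strict Implicit.

Lemma valS_ n (i : 'I_n) : (ordS i : nat) = if i.+1 == n then 0 else i.+1.
Proof.
rewrite /=; case: ifP => [/eqP ->|h]; first by rewrite modnn.
rewrite modn_small //; have := ltn_ord i; lia.
Qed.
Lemma valP_ n (i : 'I_n) : (ord_pred i : nat) = if (i : nat) == 0 then n.-1 else (i : nat).-1.
Proof.
have := ltn_ord i.
rewrite /=; case: ifP => [/eqP -> h|h h2]; first by rewrite add0n modn_small //; lia.
have -> : (i + n).-1 = (i : nat).-1 + n by lia.
rewrite modnDr modn_small //; lia.
Qed.
Lemma eqI_ n (a b : 'I_n) : (a == b) = ((a : nat) == b). Proof. by []. Qed.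
Ltac idx := rewrite ?eqI_ ?valS_ ?valP_; repeat case: ifP; lia.
Definition adjI n (a b : 'I_n) := (b == ordS a) || (a == ordS b).

Lemma idx_c n (i j : 'I_n) : 4 < n -> adjI j (ord_pred i) -> adjI j (ordS i) -> j = i.
Proof. move=> h; rewrite /adjI => h1 h2; apply/val_inj; move: h1 h2 (ltn_ord i) (ltn_ord j).
rewrite /=. idx. Qed.
Lemma idx_b n (i : 'I_n) : 4 < n -> ~~ adjI (ord_pred i) (ordS i).
Proof. move=> h; rewrite /adjI; move: (ltn_ord i). idx. Qed.
Lemma idx_d n (i : 'I_n) : 4 < n -> ord_pred i != i.
Proof. move=> h; move: (ltn_ord i). idx. Qed.
Lemma idx_g n (i j : 'I_n) : 4 < n -> (j == i) || adjI i j ->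
  (ordS j == i) || adjI i (ordS j) -> (ord_pred j == i) || adjI i (ord_pred j) -> j = i.
Proof. move=> h; rewrite /adjI => h1 h2 h3; apply/val_inj; move: h1 h2 h3 (ltn_ord i) (ltn_ord j).
rewrite /=. idx. Qed.

Lemma cbipE (T : finType) (e : rel T) (e_sym : symmetric e) (Bs : {set T}) :
  is_cbip e Bs -> exists X : {set T},
    forall x y, x \in Bs -> y \in Bs -> e x y = ((x \in X) != (y \in X)).
Proof.
case/existsP=> X /andP [_ /and5P [_ _ H1 H2 H3]]; exists X => x y hx hy.
case hxX: (x \in X); case hyX: (y \in X) => /=.
- by apply/negbTE; move/forall_inP: H1 => /(_ x hxX)/forall_inP/(_ y hyX).
- by move/forall_inP: H3 => /(_ x hxX)/forall_inP; apply; rewrite inE hyX hy.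
- by rewrite e_sym; move/forall_inP: H3 => /(_ y hyX)/forall_inP; apply; rewrite inE hxX hx.
- apply/negbTE; move/forall_inP: H2; move=> /(_ x)/(_ _)/forall_inP/(_ y) h.
  by apply: h; rewrite inE ?hxX ?hyX ?hx ?hy.
Qed.

Theorem mainTheorem9 (T : finType) (e : rel T)
    (e_sym : symmetric e) (e_irr : irreflexive e)
    (n : nat) (v : 'I_n -> T)
    (hC : induced_cycle e v) (hgood : good_neighbours e v)
    (B : 'I_n -> biclique e)
    (hB : forall i : 'I_n,
        [set v (ord_pred i); v i; v (ordS i)] \subset val (B i)) :
  (forall i : 'I_n, val (B i) \subset cnbhd e (v i)) /\
  induced_cycle (@kbe_adj T e) B /\
  good_neighbours (@kbe_adj T e) B.
Proof.
move: (hC) => [n4 [vinj adjE]].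
have common : forall i z, e z (v (ord_pred i)) -> e z (v (ordS i)) -> z = v i \/ e z (v i).
  move=> i z h1 h2; case: (boolP (z \in codom v)) => [/codomP [j hj]|hz].
    subst z; left; f_equal; apply: idx_c n4 _ _; by rewrite /adjI -adjE.
  by right; exact: hgood z hz i h1 h2.
have star : forall (Bs : {set T}) i, is_cbip e Bs ->
    [set v (ord_pred i); v i; v (ordS i)] \subset Bs ->
    (forall x, x \in Bs -> x = v i \/ e (v i) x) /\
    (forall x y, x \in Bs -> y \in Bs -> e x y -> x = v i \/ y = v i).
  move=> Bs i hcb /subsetP hsub.
  have vp : v (ord_pred i) \in Bs by apply: hsub; rewrite !inE eqxx ?orbT.
  have vi : v i \in Bs by apply: hsub; rewrite !inE eqxx ?orbT.
  have vs : v (ordS i) \in Bs by apply: hsub; rewrite !inE eqxx ?orbT.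
  have [X hE] := cbipE e_sym hcb.
  have key : forall x, x \in Bs -> (x \in X) = (v i \in X) -> x = v i.
    move=> x hx hs.
    have h1 : e x (v (ord_pred i)).
      by rewrite hE // hs -hE // adjE ord_predK eqxx orbT.
    have h2 : e x (v (ordS i)).
      by rewrite hE // hs -hE // adjE eqxx.
    case: (common i x h1 h2) => // h; by move: h; rewrite hE // hs eqxx.
  split.
    move=> x hx; case hs: ((x \in X) == (v i \in X)).
      by left; apply: key => //; apply/eqP.
    by right; rewrite hE // eq_sym hs.
  move=> x y hx hy hxy; case hs: ((x \in X) == (v i \in X)).
    by left; apply: key => //; apply/eqP.
  case hs2: ((y \in X) == (v i \in X)).
    by right; apply: key => //; apply/eqP.
  move: hxy hs hs2; rewrite hE //.
  by case: (x \in X); case: (y \in X); case: (v i \in X).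
have cbB : forall i, is_cbip e (val (B i)).
  by move=> i; case/andP: (valP (B i)).
have inB : forall i, [/\ v (ord_pred i) \in val (B i), v i \in val (B i)
    & v (ordS i) \in val (B i)].
  by move=> i; have /subsetP h := hB i; split; apply: h; rewrite !inE eqxx ?orbT.
have adjIE : forall i j, adjI i j = e (v i) (v j) by move=> i j; rewrite adjE.
have adjIC : forall i j : 'I_n, adjI i j = adjI j i.
  by move=> i j; rewrite /adjI orbC.
have inBadj : forall i j : 'I_n, adjI i j -> v j \in val (B i).
  move=> i j; case/orP => /eqP ->; first by case: (inB i).
  by case: (inB (ordS j)); rewrite ordSK.
have Binj : injective B.
  move=> i j hij.
  have [s1 _] := star _ i (cbB i) (hB i).
  have nb : forall k, v k \in val (B i) -> (k == i) || adjI i k.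
    move=> k hk; case: (s1 _ hk) => [/vinj ->|h]; first by rewrite eqxx.
    by rewrite adjIE h orbT.
  rewrite hij in nb; case: (inB j) => h1 h2 h3.
  by symmetry; apply: idx_g n4 (nb _ h2) (nb _ h3) (nb _ h1).
split.
  move=> i; apply/subsetP => x hx.
  have [s1 _] := star _ i (cbB i) (hB i).
  by rewrite /cnbhd inE; case: (s1 x hx) => [->|->]; rewrite ?eqxx ?orbT.
split.
  split => //; split => // i j.
  apply/idP/idP.
    case/andP=> hne /existsP [x /existsP [y /and5P [xi yi xj yj exy]]].
    have [_ s2] := star _ i (cbB i) (hB i).
    have [_ t2] := star _ j (cbB j) (hB j).
    have hij : i != j by apply: contraNneq hne => ->.
    case: (s2 x y xi yi exy) => hx; case: (t2 x y xj yj exy) => hy.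
    - by move: hij; rewrite hx in hy; rewrite (vinj _ _ hy) eqxx.
    - by move: exy; rewrite hx hy -adjIE.
    - by move: exy; rewrite hx hy -adjIE adjIC.
    - by move: hij; rewrite hx in hy; rewrite (vinj _ _ hy) eqxx.
  move=> h0; have h : adjI i j := h0.
  have hij : i != j.
    by apply/eqP => E; move: h; rewrite E adjIE e_irr.
  rewrite /kbe_adj; apply/andP; split.
    by apply: contra hij => /eqP /Binj ->.
  apply/existsP; exists (v i); apply/existsP; exists (v j).
  have hji : adjI j i by rewrite adjIC.
  rewrite (inBadj _ _ h) (inBadj _ _ hji) -adjIE h andbT.
  by case: (inB i) => _ -> _; case: (inB j) => _ -> _.
move=> W hW i h1 h2.
have hWi : W != B i by apply/eqP => E; move: hW; rewrite E codom_f.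
have getv : forall j, kbe_adj W (B j) -> v j \in val W /\
    exists a, [/\ a \in val W, a \in val (B j) & e (v j) a].
  move=> j; case/andP=> _ /existsP [x /existsP [y /and5P [xW yW xj yj exy]]].
  have [_ s2] := star _ j (cbB j) (hB j).
  case: (s2 x y xj yj exy) => hx.
    by split; [rewrite -hx | exists y; split => //; rewrite -hx].
  by split; [rewrite -hx | exists x; split => //; rewrite -hx e_sym].
have [vpW [a [aW ap epa]]] := getv _ h1.
have [vsW _] := getv _ h2.
have cbW : is_cbip e (val W) by case/andP: (valP W).
have [X hE] := cbipE e_sym cbW.
have eps : e (v (ord_pred i)) (v (ordS i)) = false.
  by apply/negbTE; rewrite -adjIE idx_b.
have eas : e a (v (ordS i)).
  move: epa eps; rewrite !hE //.
  by case: (a \in X); case: (v (ord_pred i) \in X); case: (v (ordS i) \in X).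
have viW : v i \in val W.
  case: (common i a _ eas); first by rewrite e_sym.
    by move=> <-.
  move=> eai.
  have [_ s2] := star _ (ord_pred i) (cbB _) (hB _).
  have vip : v i \in val (B (ord_pred i)).
    by rewrite inBadj // /adjI ord_predK eqxx.
  case: (s2 a (v i) ap vip eai) => h.
    by move: epa; rewrite h e_irr.
  by move: (idx_d i n4); rewrite -(vinj _ _ h) eqxx.
rewrite /kbe_adj hWi /=; apply/existsP; exists (v i); apply/existsP; exists (v (ord_pred i)).
rewrite viW vpW; case: (inB i) => -> -> _ /=.
by rewrite adjE ord_predK eqxx orbT.
Qed.
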